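(* Let $q\in\mathbb{C}[x_0,\dots,x_3]_2$ be a quadratic form of rank four. Let $l\in S_1$ and let $q_l\in T_2$ be such that $q_l(q^2)=l^2$. Then $q_l\in\langle q^{-1},p_l^2\rangle$. In particular, $\{q_l=0\}$ is tangent to $Q^{-1}$ along their intersection, i.e. along the conic section $\{p_l=q^{-1}=0\}$, where $\{p_l=0\}$ is the polar plane to $[l]$ with respect to $Q^{-1}$.
   Context: $S=\mathbb{C}[x_0,\dots,x_3]$, $T=\mathbb{C}[y_0,\dots,y_3]$; $T$ acts on $S$ and $S$ acts on $T$ by differentiation. $q^{-1}\in T_2$ is the inverse quadric: the quadric such that $S_1\to T_1$, $l\mapsto l(q^{-1})$, is inverse to $T_1\to S_1$, $g\mapsto g(q)$ (e.g. $q=x_0x_1+x_2x_3$, $q^{-1}=y_0y_1+y_2y_3$). $Q^{-1}=\{q^{-1}=0\}\subset\mathbb{P}(S_1)$ and $p_l=l(q^{-1})\in T_1$, so that $p_l(q)=l$. *)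

(* Defs.v *)
From HB Require Import structures.
From mathcomp Require Import all_boot all_order all_algebra.
From mathcomp Require Import reals.
From mathcomp.real_closed Require Import complex.
From mathcomp Require Import mpoly.

Set Implicit Arguments. Unset Strict Implicit. Unset Printing Implicit Defensive.
Import Order.TTheory GRing.Theory Num.Theory.
Local Open Scope ring_scope.

Notation CC R := (complex (Real.sort R)).

(* Both S = C[x_0..x_3] and T = C[y_0..y_3] are represented by {mpoly C[4]};
   the variable 'X_i stands for x_i in S and for y_i in T. *)

(* Apolarity action by differentiation: g acts on f as g(d/dx_0,...,d/dx_3) f,
   i.e. sum over monomials m of g of  g_m * d^m f. *)
Definition apolar (K : ringType) (n : nat) (g f : {mpoly K[n]}) : {mpoly K[n]} :=
  \sum_(m <- msupp g) g@_m *: mderivm m f.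

(* Hessian (matrix of second partials, constant for a quadric) *)
Definition hessian (K : ringType) (n : nat) (q : {mpoly K[n]}) : 'M[K]_n :=
  \matrix_(i < n, j < n) (mderiv i (mderiv j q))@_0%MM.

Definition quadric_of_rank (K : fieldType) (n : nat) (q : {mpoly K[n]}) (r : nat) :=
  (q \is 2.-homog) /\ \rank (hessian q) = r.

Definition inverse_quadric (K : ringType) (n : nat) (q qinv : {mpoly K[n]}) :=
  [/\ qinv \is 2.-homog,
      (forall g : {mpoly K[n]}, g \is 1.-homog -> apolar (apolar g q) qinv = g) &
      (forall l : {mpoly K[n]}, l \is 1.-homog -> apolar (apolar l qinv) q = l)].

(* Main.v *)
Require Import Defs.
From HB Require Import structures.
From mathcomp Require Import all_boot all_order all_algebra.
From mathcomp Require Import reals.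
From mathcomp.real_closed Require Import complex.
From mathcomp Require Import mpoly.
From mathcomp Require Import ring.
Set Implicit Arguments. Unset Strict Implicit. Unset Printing Implicit Defensive.
Import GRing.Theory Num.Theory.
Local Open Scope ring_scope.

Section Aux.
Variables (n : nat) (K : comRingType).
Implicit Types (p f q D : {mpoly K[n]}).

Lemma DH d p m : p \is d.-homog -> mderivm m p \is (d - mdeg m)%N.-homog.
Proof.
move=> hp; apply/dhomogP => m'; rewrite mcoeff_msupp mcoeff_mderivm.
have [h0|] := eqVneq (p@_(m + m')) 0; first by rewrite h0 mul0rn eqxx.
rewrite -mcoeff_msupp => /(dhomog_mf hp); move=> H _; have H' : mdeg (m + m') = d by exact: H.
by rewrite -H' mdegD addKn.
Qed.

Lemma apolarX m f : apolar 'X_[m] f = mderivm m f.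
Proof. by rewrite /apolar msuppX big_seq1 mcoeffX eqxx scale1r. Qed.

Lemma const0 p : p \is 0.-homog -> p = (p@_0%MM)%:MP.
Proof.
move=> hp; apply/mpolyP => m'; rewrite mcoeffC.
have [->|ne] := eqVneq m' 0%MM; first by rewrite mulr1.
rewrite mulr0; apply: (dhomog_nemf_coeff hp).
have : mdeg m' != 0%N by rewrite mdeg_eq0.
by [].
Qed.

Lemma mdegS_split (m : 'X_{1..n}) d : mdeg m = d.+1 -> exists i, exists m', m = (U_(i) + m')%MM /\ mdeg m' = d.
Proof.
move=> hm.
have : m != 0%MM by rewrite -mdeg_eq0 hm.
have [i hi|] := pickP (fun i => m i != 0%N); last first.
  move=> h; case/eqP; apply/mnmP => j; rewrite mnm0E; by move: (h j) => /negbFE/eqP.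
move=> _; exists i, (m - U_(i))%MM; split.
  rewrite addmC submK //; apply/mnm_lepP => j; rewrite mnm1E.
  by case: eqP => // <-; rewrite lt0n.
have le : (U_(i) <= m)%MM.
  apply/mnm_lepP => j; rewrite mnm1E.
  by case: eqP => // <-; rewrite lt0n.
have := mdegD (m - U_(i)) U_(i); rewrite submK // hm mdeg1 addn1.
by case.
Qed.


Lemma deg2 (m : 'X_{1..n}) : mdeg m = 2%N -> exists i j, m = (U_(i) + U_(j))%MM.
Proof.
move=> /mdegS_split [i [m' [-> /mdegS_split [j [m'' [-> h0]]]]]].
have : m'' == 0%MM by rewrite -mdeg_eq0 h0.
by move/eqP => ->; exists i, j; rewrite addm0.
Qed.

Lemma compXT (t : n.-tuple {mpoly K[n]}) i : 'X_i \mPo t = tnth t i.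
Proof. by rewrite comp_mpolyXU -tnth_nth. Qed.

Lemma compXU (F : 'I_n -> {mpoly K[n]}) i : 'X_i \mPo [tuple F j | j < n] = F i.
Proof. by rewrite comp_mpolyXU -tnth_nth tnth_map tnth_ord_tuple. Qed.

Lemma sq_deriv q (m : 'X_{1..n}) : mdeg m = 2%N ->
  mderivm m (q * q) = (q * mderivm m q + (('X_[m] : {mpoly K[n]}) \mPo [tuple mderiv i q | i < n])) *+ 2.
Proof.
move=> /deg2 [i [j ->]]; rewrite !mderivmDm !mderivmU1m mpolyXD rmorphM /= !compXU.
rewrite !mderivM mderivD !mderivM; ring.
Qed.

Lemma comp_lin f p : p \is 1.-homog -> p \mPo [tuple mderiv i f | i < n] = apolar p f.
Proof.
move=> hp; rewrite comp_mpolyEX /apolar; apply: eq_big_seq => m hm.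
have : mdeg m == 1%N by rewrite (dhomog_mf hp hm).
by case/mdeg1P => i /eqP ->; rewrite compXU mderivmU1m.
Qed.


Lemma euler d p : p \is d.-homog -> \sum_(i < n) 'X_i * mderiv i p = p *+ d.
Proof.
move=> hp.
transitivity (\sum_(i < n) 'X_i * mderiv i (\sum_(m <- msupp p) p@_m *: 'X_[m])).
  by rewrite -mpolyE.
under eq_bigr => i _ do rewrite raddf_sum mulr_sumr.
rewrite exchange_big /= [in RHS](mpolyE p) -sumrMnl; apply: eq_big_seq => m hm.
have hd : mdeg m = d by rewrite (dhomog_mf hp hm).
transitivity (\sum_(i < n) (m i)%:R *: (p@_m *: 'X_[m])).
  apply: eq_bigr => i _; rewrite mderivZ mderivX.
  have [->|nz] := eqVneq (m i) 0%N; first by rewrite !scale0r scaler0 mulr0.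
  rewrite -!scalerAr mulrC -mpolyXD submK; last first.
    apply/mnm_lepP => j; rewrite mnm1E.
    by case: eqP => // <-; rewrite lt0n.
  by rewrite scalerA mulrC -scalerA.
by rewrite -scaler_suml -natr_sum -mdegE hd scaler_nat.
Qed.


Lemma apolar_sq D q : D \is 2.-homog ->
  apolar D (q * q) = (q * apolar D q + (D \mPo [tuple mderiv i q | i < n])) *+ 2.
Proof.
move=> hD; rewrite /apolar comp_mpolyEX mulr_sumr -big_split -sumrMnl /=.
apply: eq_big_seq => m hm; rewrite sq_deriv ?(dhomog_mf hD hm) //.
by rewrite -!scaler_nat scalerA mulrC -scalerA scalerDr scalerAr.
Qed.

Lemma apolar_const D q : D \is 2.-homog -> q \is 2.-homog ->
  apolar D q = ((apolar D q)@_0%MM)%:MP.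
Proof.
move=> hD hq; apply: const0; rewrite /apolar big_seq; apply: rpred_sum => m hm.
apply: rpredZ; have := DH m hq; by rewrite (dhomog_mf hD hm) subnn.
Qed.

Lemma comp_inv (t t' : n.-tuple {mpoly K[n]}) D :
  (forall i, tnth t i \mPo t' = 'X_i) -> (D \mPo t) \mPo t' = D.
Proof.
move=> h; rewrite -[RHS]comp_mpoly_id [in RHS]comp_mpolyEX. rewrite [D \mPo t]comp_mpolyEX raddf_sum.
apply: eq_bigr => m _; rewrite /= comp_mpolyZ; congr (_ *: _).
rewrite !comp_mpolyX rmorph_prod; apply: eq_bigr => i _.
by rewrite rmorphXn /= h tnth_map tnth_ord_tuple.
Qed.

End Aux.


Section Main.
Variables (n : nat) (K : fieldType).
Hypothesis two : (2 : K) != 0.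
Implicit Types (q qinv l ql : {mpoly K[n]}).

Lemma hX q qinv i : q \is 2.-homog ->
  (forall g, g \is 1.-homog -> apolar (apolar g q) qinv = g) ->
  mderiv i q \mPo [tuple mderiv j qinv | j < n] = 'X_i.
Proof.
move=> hq Hinv; rewrite comp_lin; last first.
  by rewrite -mderivmU1m; have := DH U_(i) hq; rewrite mdeg1.
rewrite -mderivmU1m -apolarX Hinv //.
by rewrite dhomogX; apply/eqP; exact: mdeg1.
Qed.

Lemma hpsi q qinv : q \is 2.-homog -> qinv \is 2.-homog ->
  (forall g, g \is 1.-homog -> apolar (apolar g q) qinv = g) ->
  q \mPo [tuple mderiv j qinv | j < n] = qinv.
Proof.
move=> hq hqinv Hinv.
have : (q *+ 2) \mPo [tuple mderiv j qinv | j < n] = qinv *+ 2.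
  rewrite -(euler hq) -(euler hqinv) raddf_sum; apply: eq_bigr => i _.
  rewrite [LHS]rmorphM /= compXT tnth_map tnth_ord_tuple hX //.
  by rewrite mulrC.
rewrite raddfMn => /(congr1 (fun z => 2^-1 *: z)).
by rewrite -!scaler_nat !scalerA mulVf ?scale1r.
Qed.

Lemma main_gen q qinv l ql : q \is 2.-homog -> qinv \is 2.-homog ->
  (forall g, g \is 1.-homog -> apolar (apolar g q) qinv = g) ->
  l \is 1.-homog -> ql \is 2.-homog ->
  apolar ql (q ^+ 2) = l ^+ 2 ->
  exists a b : K, ql = a *: qinv + b *: (apolar l qinv) ^+ 2.
Proof.
move=> hq hqinv Hinv hl hql H.
have hK := apolar_const hql hq.
move: H; rewrite !expr2 apolar_sq // hK.
move=> /(congr1 (comp_mpoly [tuple mderiv j qinv | j < n])).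
rewrite raddfMn raddfD [X in X + _]rmorphM /= hpsi // comp_mpolyC comp_inv; last first.
  by move=> i; rewrite tnth_map tnth_ord_tuple hX.
rewrite [RHS]rmorphM /= comp_lin // => E.
exists (- (apolar ql q)@_0%MM), 2^-1.
rewrite -E -scaler_nat scalerA mulVf // scale1r mulrC mul_mpolyC addrA scaleNr addNr add0r.
by [].
Qed.

End Main.

Theorem lemma4p8 (R : realType) (q qinv l ql : {mpoly (CC R)[4]}) :
  quadric_of_rank q 4 ->
  inverse_quadric q qinv ->
  l \is 1.-homog ->
  ql \is 2.-homog ->
  apolar ql (q ^+ 2) = l ^+ 2 ->
  exists a b : CC R, ql = a *: qinv + b *: (apolar l qinv) ^+ 2.
Proof.
move=> [hq _] [hqinv Hinv _] hl hql H.
have two : (2 : CC R) != 0 by rewrite pnatr_eq0.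
exact: (main_gen two hq hqinv Hinv hl hql H).
Qed.
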